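(* Let $n\ge 2$, $\mathsf u\in\mathcal S_n$ and $0\le j<n(n-1)$. If $\ell(u_{(j)}\sigma_{j+1})<\ell(u_{(j)})$, then $u_{j+1}=\sigma_{j+1}$.
   Context: $\widetilde S_n$ is the affine symmetric group (bijections $w:\mathbb Z\to\mathbb Z$ with $w(i+n)=w(i)+n$ and $\sum_{i=1}^n w(i)=\binom{n+1}2$, under composition), a Coxeter group with simple reflections $s_i=(\!(i,i+1)\!)$, $i\in\{0,\dots,n-1\}$, where $(\!(i,j)\!)$ swaps $i+kn$ and $j+kn$ for all $k$; $\ell$ denotes Coxeter length with respect to these generators. $\bm\lambda_n$ is the word $[s_0,\dots,s_{n-1}]$ repeated $n-1$ times with $j$-th letter $\sigma_j=s_{(j-1)\bmod n}$ (index in $\{0,\dots,n-1\}$). A subword is $\mathsf u=[u_1,\dots,u_{n(n-1)}]$ with $u_j\in\{\sigma_j,e\}$; $j$ is a skip if $u_j=e$. $u_{(j)}=u_1\cdots u_j$, $u_{(0)}=e$. $\mathcal S_n$ is the set of subwords with exactly $2n-2$ skips and $u_1\cdots u_{n(n-1)}=e$. *)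

(* Defs.v *)
From mathcomp Require Import all_boot all_order all_algebra.
Set Implicit Arguments. Unset Strict Implicit. Unset Printing Implicit Defensive.
Import GRing.Theory Num.Theory.

(* Elements of the affine symmetric group are represented as functions
   int -> int; group product is composition: (u * v) x = u (v x). *)

Definition sref (n i : nat) (x : int) : int :=
  let r := ((x - i%:Z)%R %% n%:Z)%Z in
  if r == 0%R then (x + 1)%R else if r == 1%R then (x - 1)%R else x.

Definition word_eval (n : nat) (w : seq nat) : int -> int :=
  foldr (fun i f => sref n i \o f) id w.

Definition has_length (n : nat) (f : int -> int) (k : nat) : Prop :=
  (exists w : seq nat, all (fun i => i < n)%N w /\ size w = k /\
                       f =1 word_eval n w) /\
  (forall w : seq nat, all (fun i => i < n)%N w -> f =1 word_eval n w ->
                       (k <= size w)%N).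

(* Letter at 0-based position p of lambda_n: sigma_{p+1} = s_{p mod n}. *)
Definition lam_letter (n p : nat) : nat := (p %% n)%N.

(* A subword u of lambda_n is encoded by a mask m : seq bool of length
   n(n-1); m`_p = true iff u_{p+1} = sigma_{p+1} (false iff p+1 is a skip).
   [prefix_word n m j] is the word whose product is u_(j) = u_1 ... u_j. *)
Definition prefix_word (n : nat) (m : seq bool) (j : nat) : seq nat :=
  [seq lam_letter n p | p <- iota 0 j & nth false m p].

Definition prefix_prod (n : nat) (m : seq bool) (j : nat) : int -> int :=
  word_eval n (prefix_word n m j).

Definition in_Sn (n : nat) (m : seq bool) : Prop :=
  size m = (n * (n - 1))%N /\
  count negb m = (2 * n - 2)%N /\
  prefix_prod n m (n * (n - 1)) =1 id.

(* Main.v *)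
Require Import Defs.
From mathcomp Require Import all_boot all_order all_algebra.
From mathcomp Require Import zify ring lra.

Module L1.
Set Implicit Arguments. Unset Strict Implicit. Unset Printing Implicit Defensive.
Import GRing.Theory Num.Theory Order.TTheory.
Local Open Scope ring_scope.

Section Basics.
Variable n : nat.
Hypothesis n2 : (2 <= n)%N.

Lemma nz : (n%:Z != 0). Proof. by rewrite eqz_nat; lia. Qed.
Lemma npos : (0 < n%:Z). Proof. by rewrite ltz_nat; lia. Qed.

Lemma divz_uniq (x q r : int) : 0 <= r < n%:Z -> x = q * n%:Z + r ->
  (x %/ n%:Z)%Z = q /\ (x %% n%:Z)%Z = r.
Proof.
move=> hr ->; split.
  by rewrite divzMDl ?nz // divz_small ?addr0 // gtz0_abs ?npos.
by rewrite modzMDl modz_small.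
Qed.

Lemma modz_rng (x : int) : 0 <= (x %% n%:Z)%Z < n%:Z.
Proof. by rewrite modz_ge0 ?nz // ltz_pmod ?npos. Qed.

Lemma divz_eqn (x : int) : x = (x %/ n%:Z)%Z * n%:Z + (x %% n%:Z)%Z.
Proof. exact: divz_eq. Qed.

Lemma sref_def (i : nat) (x : int) :
  sref n i x = (let r := ((x - i%:Z) %% n%:Z)%Z in
     if r == 0 then x + 1 else if r == 1 then x - 1 else x).
Proof. by []. Qed.

Lemma sref_per (i : nat) (x : int) : sref n i (x + n%:Z) = sref n i x + n%:Z.
Proof.
rewrite /sref (_ : x + n%:Z - i%:Z = (x - i%:Z) + 1 * n%:Z); last by ring.
rewrite -modzDmr modzMl addr0.
by case: ifP => _; [|case: ifP => _]; ring.
Qed.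

Lemma mod1 : (1 %% n%:Z)%Z = 1.
Proof. by rewrite modz_small // ltz_nat; lia. Qed.

Lemma sref_inv (i : nat) (x : int) : sref n i (sref n i x) = x.
Proof.
rewrite [sref n i x]sref_def /=; set r := ((x - i%:Z) %% n%:Z)%Z.
case: eqP => [r0|r0].
  rewrite /sref.
  have -> : ((x + 1 - i%:Z) %% n%:Z)%Z = 1.
    rewrite (_ : x + 1 - i%:Z = (x - i%:Z) + 1); last by ring.
    by rewrite -modzDml -/r r0 add0r mod1.
  rewrite oner_eq0 eqxx; ring.
case: eqP => [r1|r1].
  rewrite /sref.
  have -> : ((x - 1 - i%:Z) %% n%:Z)%Z = 0.
    rewrite (_ : x - 1 - i%:Z = (x - i%:Z) - 1); last by ring.
    by rewrite -modzDml -/r r1 subrr mod0z.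
  by rewrite eqxx; ring.
by rewrite /sref -/r; move/eqP/negPf: r0 => ->; move/eqP/negPf: r1 => ->.
Qed.

Lemma sref_inj (i : nat) : injective (sref n i).
Proof. exact: (can_inj (sref_inv i)). Qed.

Lemma sref_i (i : nat) (k : int) : sref n i (i%:Z + k * n%:Z) = i%:Z + k * n%:Z + 1.
Proof.
rewrite /sref (_ : i%:Z + k * n%:Z - i%:Z = k * n%:Z + 0); last by ring.
by rewrite modzMDl mod0z eqxx.
Qed.

Lemma sref_i1 (i : nat) (k : int) : sref n i (i%:Z + 1 + k * n%:Z) = i%:Z + k * n%:Z.
Proof.
rewrite /sref (_ : i%:Z + 1 + k * n%:Z - i%:Z = k * n%:Z + 1); last by ring.
rewrite modzMDl mod1 oner_eq0 eqxx; ring.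
Qed.

Lemma sref_other (i : nat) (x : int) : ((x - i%:Z) %% n%:Z)%Z != 0 ->
  ((x - i%:Z) %% n%:Z)%Z != 1 -> sref n i x = x.
Proof. by rewrite /sref => /negPf -> /negPf ->. Qed.

End Basics.

Section Win.
Variable n : nat.
Hypothesis n2 : (2 <= n)%N.

Definition phi (d : int) : nat := `|(d %/ n%:Z)%Z|%N.
Fixpoint PS (s : seq int) : nat :=
  if s is x :: s' then (\sum_(y <- s') phi (y - x) + PS s')%N else 0%N.
Definition win (f : int -> int) (k : int) : seq int :=
  [seq f (k + j%:Z) | j <- iota 0 n].
Definition Lf f := PS (win f 0).
Definition periodic (f : int -> int) := forall x, f (x + n%:Z) = f x + n%:Z.
Definition goodf f := [/\ periodic f, injective f &
   \sum_(y <- win f 0) y = \sum_(j <- iota 0 n) j%:Z].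

Lemma PS_swap p x y s :
  (PS (p ++ x :: y :: s) + phi (x - y) = PS (p ++ y :: x :: s) + phi (y - x))%N.
Proof.
elim: p => [|z p IH] /=.
  rewrite !big_cons; lia.
rewrite !big_cat !big_cons /=; lia.
Qed.

Lemma PS_rcons s z : PS (rcons s z) = (PS s + \sum_(y <- s) phi (z - y))%N.
Proof.
elim: s => [|x s IH] /=; first by rewrite !big_nil.
rewrite -cats1 big_cat big_seq1 cats1 IH big_cons /=; lia.
Qed.

Lemma nz' : (n%:Z != 0). Proof. exact: nz. Qed.

Lemma phi_ge0 d : 0 <= d -> phi d = `|(d %/ n%:Z)%Z|%N.
Proof. by []. Qed.

Lemma phi_neg d : (d %% n%:Z)%Z != 0 -> 0 < d -> phi (- d) = (phi d).+1.
Proof.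
move=> hm hd; rewrite /phi.
set q := (d %/ n%:Z)%Z; set r := (d %% n%:Z)%Z.
have hq : 0 <= q by rewrite /q divz_ge0 ?npos // ltW.
have hr := modz_rng n2 d; rewrite -/r in hr.
have E := divz_eqn n d; rewrite -/q -/r in E.
have [-> _] : ((- d) %/ n%:Z)%Z = - q - 1 /\ ((- d) %% n%:Z)%Z = n%:Z - r.
  apply: divz_uniq => //.
    have hr0 : r <> 0 by apply/eqP. move: hr hr0; lia.
  rewrite {1}E; ring.
lia.
Qed.

Lemma phi_rot d : (d %% n%:Z)%Z != 0 -> phi (n%:Z - d) = phi d.
Proof.
move=> hm; rewrite /phi.
set q := (d %/ n%:Z)%Z; set r := (d %% n%:Z)%Z.
have hr := modz_rng n2 d; rewrite -/r in hr.
have E := divz_eqn n d; rewrite -/q -/r in E.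
have [-> _] : ((n%:Z - d) %/ n%:Z)%Z = - q /\ ((n%:Z - d) %% n%:Z)%Z = n%:Z - r.
  apply: divz_uniq => //.
    have hr0 : r <> 0 by apply/eqP. move: hr hr0; lia.
  rewrite {1}E; ring.
by rewrite abszN.
Qed.

Lemma per_k f : periodic f -> forall (k : int) x, f (x + k * n%:Z) = f x + k * n%:Z.
Proof.
move=> hp.
have hn : forall (k : nat) x, f (x + k%:Z * n%:Z) = f x + k%:Z * n%:Z.
  elim=> [|k IH] x; first by rewrite !mul0r !addr0.
  rewrite (_ : x + k.+1%:Z * n%:Z = (x + k%:Z * n%:Z) + n%:Z); last first.
    rewrite -addn1 PoszD mulrDl mul1r; ring.
  rewrite hp IH -addn1 PoszD mulrDl mul1r; ring.
case=> k x; first exact: hn.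
rewrite NegzE mulNr.
have := hn k.+1 (x - k.+1%:Z * n%:Z).
rewrite subrK => ->; ring.
Qed.

Lemma modinj f : periodic f -> injective f -> forall a b : int,
  ((f a - f b) %% n%:Z)%Z = 0 -> ((a - b) %% n%:Z)%Z = 0.
Proof.
move=> hp hi a b.
set q := ((f a - f b) %/ n%:Z)%Z.
have E := divz_eqn n (f a - f b); rewrite -/q => h0; rewrite h0 addr0 in E.
have : f a = f (b + q * n%:Z) by rewrite per_k // -E; ring.
move/hi => ->.
by rewrite (_ : b + q * n%:Z - b = q * n%:Z + 0) ?modzMDl ?mod0z //; ring.
Qed.

Lemma modz_nz (x : int) : 0 < `|x| < n%:Z -> (x %% n%:Z)%Z != 0.
Proof.
case/andP=> h1 h2; apply/negP => /eqP h.
have E := divz_eqn n x; rewrite h addr0 in E.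
set q := (x %/ n%:Z)%Z in E.
have : q != 0 by apply/negP => /eqP q0; move: h1; rewrite E q0 mul0r normr0 ltxx.
rewrite -normr_gt0.
move: h2; rewrite E normrM (gtr0_norm (npos n2)).
set a := `|q|; have := npos n2; nia.
Qed.

Lemma win_nz f : periodic f -> injective f -> forall a b : int, a != b ->
  `|a - b| < n%:Z -> ((f a - f b) %% n%:Z)%Z != 0.
Proof.
move=> hp hi a b hab hlt; apply/negP => /eqP /(modinj hp hi).
apply/eqP; apply: modz_nz; rewrite hlt andbT normr_gt0 subr_eq0 //.
Qed.

End Win.

End L1.
Import L1.

Module L2.
Set Implicit Arguments. Unset Strict Implicit. Unset Printing Implicit Defensive.
Import GRing.Theory Num.Theory Order.TTheory.
Local Open Scope ring_scope.

Section Win2.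
Variable n : nat.
Hypothesis n2 : (2 <= n)%N.

Lemma win_split f k i : (i.+1 < n)%N ->
  win n f k = [seq f (k + j%:Z) | j <- iota 0 i] ++
     f (k + i%:Z) :: f (k + i.+1%:Z) :: [seq f (k + j%:Z) | j <- iota i.+2 (n - i.+2)].
Proof.
move=> hi; rewrite /win (_ : iota 0 n = iota 0 (i + (n - i.+2).+2)); last first.
  by congr iota; lia.
by rewrite iotaD map_cat add0n.
Qed.

Lemma win_swap f g k i : (i.+1 < n)%N ->
  (forall j, (j < n)%N -> j != i -> j != i.+1 -> g (k + j%:Z) = f (k + j%:Z)) ->
  g (k + i%:Z) = f (k + i.+1%:Z) -> g (k + i.+1%:Z) = f (k + i%:Z) ->
  win n g k = [seq f (k + j%:Z) | j <- iota 0 i] ++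
     f (k + i.+1%:Z) :: f (k + i%:Z) :: [seq f (k + j%:Z) | j <- iota i.+2 (n - i.+2)].
Proof.
move=> hi hfg h1 h2; rewrite (win_split g k hi) h1 h2; congr (_ ++ _ :: _ :: _).
  apply/eq_in_map => j; rewrite mem_iota => hj; apply: hfg; lia.
apply/eq_in_map => j; rewrite mem_iota => hj; apply: hfg; lia.
Qed.

Definition mid (f : int -> int) : seq int := [seq f (0 + j%:Z) | j <- iota 1 n.-1].

Lemma win0E f : win n f 0 = f 0 :: mid f.
Proof.
by rewrite /win /mid (_ : n = n.-1.+1) /=; [rewrite addr0|lia].
Qed.

Lemma win1E f : periodic n f -> win n f 1 = rcons (mid f) (f 0 + n%:Z).
Proof.
move=> hp; rewrite /win /mid.
rewrite (_ : iota 0 n = rcons (iota 0 n.-1) n.-1); last first.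
  by rewrite -cats1 -[in LHS](_ : (n.-1 + 1 = n)%N) ?iotaD //; lia.
rewrite map_rcons (_ : iota 1 n.-1 = iota (1 + 0) n.-1) // iotaDl -map_comp.
congr rcons.
rewrite -hp add0r; congr f; lia.
Qed.

Lemma mid_mem f y : y \in mid f -> exists j, (0 < j < n)%N /\ y = f j%:Z.
Proof.
rewrite /mid => /mapP [j]; rewrite mem_iota => hj ->; exists j; split; first lia.
by rewrite add0r.
Qed.

Lemma PS_rot x s : (forall y, y \in s -> ((y - x) %% n%:Z)%Z != 0) ->
  PS n (x :: s) = PS n (rcons s (x + n%:Z)).
Proof.
move=> hs; rewrite (PS_rcons n2) /= addnC; congr addn.
apply: eq_big_seq => y ys; rewrite -(phi_rot n2 (hs y ys)); congr phi; ring.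
Qed.

Lemma Lf_rot f : goodf n f -> Lf n f = PS n (win n f 1).
Proof.
case=> hp hi _; rewrite /Lf win0E win1E // PS_rot // => y /mid_mem [j [hj ->]].
apply: win_nz => //.
  by apply/eqP => h; lia.
rewrite subr0 ger0_norm; lia.
Qed.

Lemma sum_win1 f : periodic n f -> \sum_(y <- win n f 1) y = \sum_(y <- win n f 0) y + n%:Z.
Proof.
move=> hp; rewrite win1E // win0E -cats1 big_cat big_seq1 big_cons /=; ring.
Qed.

Lemma sref_at i : sref n i i%:Z = i%:Z + 1.
Proof. by have := sref_i n i 0; rewrite mul0r addr0. Qed.

Lemma sref_at1 i : sref n i (i%:Z + 1) = i%:Z.
Proof. by have := sref_i1 n2 i 0; rewrite mul0r !addr0. Qed.

Lemma sref_fix i x : (2 <= x - i%:Z < n%:Z) || (2 - n%:Z <= x - i%:Z < 0) ->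
  sref n i x = x.
Proof.
case/orP=> h.
  have hm : ((x - i%:Z) %% n%:Z)%Z = x - i%:Z by rewrite modz_small //; lia.
  by apply: sref_other; rewrite hm; apply/negP => /eqP; lia.
have [_ hm] : ((x - i%:Z) %/ n%:Z)%Z = -1 /\ ((x - i%:Z) %% n%:Z)%Z = x - i%:Z + n%:Z.
  by apply: divz_uniq => //; [lia|ring].
by apply: sref_other; rewrite hm; apply/negP => /eqP; lia.
Qed.

Lemma goodf_id : goodf n id.
Proof.
split; [by move=> x | by move=> x y | ].
by rewrite /win big_map; apply: eq_bigr => j _; rewrite add0r.
Qed.

Lemma swap_in f i : (i.+1 < n)%N ->
  win n (f \o sref n i) 0 = [seq f (0 + j%:Z) | j <- iota 0 i] ++
     f (0 + i.+1%:Z) :: f (0 + i%:Z) :: [seq f (0 + j%:Z) | j <- iota i.+2 (n - i.+2)].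
Proof.
move=> hi; apply: win_swap => //.
- move=> j hj hji hji1 /=; rewrite sref_fix //; apply/orP.
  case: (ltnP j i) => hh; [right|left]; lia.
- by rewrite /= !add0r sref_at -addn1 PoszD.
- by rewrite /= !add0r -addn1 PoszD sref_at1.
Qed.

Lemma swap_wrap f : periodic n f ->
  win n (f \o sref n n.-1) 1 = [seq f (1 + j%:Z) | j <- iota 0 n.-2] ++
     f (1 + n.-2.+1%:Z) :: f (1 + n.-2%:Z) :: [seq f (1 + j%:Z) | j <- iota n.-2.+2 (n - n.-2.+2)].
Proof.
move=> hp.
rewrite (_ : n.-1 = n.-2.+1); last by lia.
apply: win_swap => //; first by lia.
- move=> j hj hji hji1 /=; rewrite sref_fix //; apply/orP; right; lia.
- rewrite /= (_ : 1 + n.-2%:Z = n.-2.+1%:Z); last by lia.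
  by rewrite sref_at -addn1 PoszD addrC.
- rewrite /= (_ : 1 + n.-2.+1%:Z = n.-2.+1%:Z + 1); last by lia.
  by rewrite sref_at1 (_ : n.-2.+1%:Z = 1 + n.-2%:Z) //; lia.
Qed.

End Win2.

End L2.
Import L2.

Module L3.
Set Implicit Arguments. Unset Strict Implicit. Unset Printing Implicit Defensive.
Import GRing.Theory Num.Theory Order.TTheory.
Local Open Scope ring_scope.

Section L3.
Variable n : nat.
Hypothesis n2 : (2 <= n)%N.

Lemma goodf_step f i : goodf n f -> (i < n)%N -> goodf n (f \o sref n i).
Proof.
case=> hp hi hs hin; split.
- by move=> x /=; rewrite sref_per hp.
- by move=> x y /= /hi /(sref_inj n2).
case: (ltnP i.+1 n) => hin1.
  by rewrite swap_in // -hs (win_split n2 f 0 hin1) !big_cat !big_cons /=; ring.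
have -> : i = n.-1 by lia.
have hpg : periodic n (f \o sref n n.-1) by move=> x /=; rewrite sref_per hp.
apply: (addIr n%:Z); rewrite -sum_win1 // swap_wrap // -hs -sum_win1 //.
have h2 : (n.-2.+1 < n)%N by lia.
by rewrite (win_split n2 f 1 h2) !big_cat !big_cons /=; ring.
Qed.

Lemma L_swap f i : goodf n f -> (i < n)%N ->
  (Lf n (f \o sref n i) + phi n (f (i%:Z + 1) - f i%:Z)%R =
   Lf n f + phi n (f i%:Z - f (i%:Z + 1))%R)%N.
Proof.
move=> hg hin; case: (ltnP i.+1 n) => hin1.
  rewrite /Lf swap_in // (win_split n2 f 0 hin1) !add0r -addn1 PoszD.
  by rewrite PS_swap.
have ei : i = n.-1 by lia.
have hg' := goodf_step hg hin.
rewrite (Lf_rot n2 hg) (Lf_rot n2 hg') ei.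
case: hg => hp _ _.
have h2 : (n.-2.+1 < n)%N by lia.
rewrite swap_wrap // (win_split n2 f 1 h2).
have -> : f (n.-1%:Z + 1) = f (1 + n.-2.+1%:Z) by congr f; lia.
have -> : f n.-1%:Z = f (1 + n.-2%:Z) by congr f; lia.
by rewrite PS_swap.
Qed.

Lemma neighbor_nz f i : goodf n f -> ((f (i%:Z + 1) - f i%:Z) %% n%:Z)%Z != 0.
Proof.
case=> hp hi _; apply: win_nz => //.
  by apply/negP => /eqP; lia.
rewrite (_ : i%:Z + 1 - i%:Z = 1); last by ring.
by rewrite normr1; lia.
Qed.

Lemma L_up f i : goodf n f -> (i < n)%N -> f i%:Z < f (i%:Z + 1) ->
  Lf n (f \o sref n i) = (Lf n f).+1.
Proof.
move=> hg hin hlt; have := L_swap hg hin.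
rewrite -[f i%:Z - _]opprB phi_neg //.
- by rewrite addnS -addSn => /eqP; rewrite eqn_add2r => /eqP.
- exact: neighbor_nz.
by rewrite subr_gt0.
Qed.

Lemma neighbor_nz' f i : goodf n f -> ((f i%:Z - f (i%:Z + 1)) %% n%:Z)%Z != 0.
Proof.
case=> hp hi _; apply: win_nz => //.
  by apply/negP => /eqP; lia.
rewrite (_ : i%:Z - (i%:Z + 1) = -1); last by ring.
by rewrite normrN normr1; lia.
Qed.

Lemma L_down f i : goodf n f -> (i < n)%N -> f (i%:Z + 1) < f i%:Z ->
  (Lf n (f \o sref n i)).+1 = Lf n f.
Proof.
move=> hg hin hlt; have := L_swap hg hin.
rewrite -[f (i%:Z + 1) - _]opprB phi_neg //.
- by rewrite addnS -addSn => /eqP; rewrite eqn_add2r => /eqP.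
- exact: neighbor_nz'.
by rewrite subr_gt0.
Qed.

End L3.

End L3.
Import L3.

Module L4.
Set Implicit Arguments. Unset Strict Implicit. Unset Printing Implicit Defensive.
Import GRing.Theory Num.Theory Order.TTheory.
Local Open Scope ring_scope.

Section L4.
Variable n : nat.
Hypothesis n2 : (2 <= n)%N.
Implicit Types (f g : int -> int).

Lemma goodf_ext f g : f =1 g -> goodf n f -> goodf n g.
Proof.
move=> e [hp hi hs]; split.
- by move=> x; rewrite -!e hp.
- by move=> x y; rewrite -!e => /hi.
by rewrite -hs /win; congr (\sum_(y <- _) y); apply/eq_in_map => j _; rewrite e.
Qed.

Lemma Lf_ext f g : f =1 g -> Lf n f = Lf n g.
Proof. by move=> e; rewrite /Lf /win; congr PS; apply/eq_in_map => j _; rewrite e. Qed.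

Lemma word_eval_rcons w i : word_eval n (rcons w i) =1 word_eval n w \o sref n i.
Proof.
rewrite /word_eval; elim: w => [|a w IH] x //=.
by rewrite IH.
Qed.

Lemma goodf_word w : all (fun i => i < n)%N w -> goodf n (word_eval n w).
Proof.
elim/last_ind: w => [|w i IH].
  by move=> _; exact: (goodf_id n).
rewrite all_rcons => /andP [hi hw].
apply: goodf_ext (fun x => esym (word_eval_rcons w i x)) _.
by have := goodf_step n2 (IH hw) hi.
Qed.

Lemma PS_eq0 s : (PS n s == 0)%N = pairwise (fun x y => phi n (y - x) == 0%N) s.
Proof.
elim: s => [|x s IH] //=; rewrite addn_eq0 IH; congr andb.
elim: s {IH} => [|y s IH]; first by rewrite big_nil.
by rewrite big_cons /= addn_eq0 IH.
Qed.

Lemma phi0 d : (phi n d == 0%N) = (0 <= d < n%:Z).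
Proof.
apply/idP/idP.
  move=> /eqP h; have E := divz_eqn n d.
  have : (d %/ n%:Z)%Z = 0 by apply/eqP; rewrite -absz_eq0; apply/eqP.
  move=> h0; rewrite h0 mul0r add0r in E; rewrite E; exact: modz_rng.
move=> h; rewrite /phi divz_small // gtr0_norm // npos //.
Qed.

Lemma Lf0P f : (Lf n f == 0%N) =
  [forall a : 'I_n, forall b : 'I_n, (a < b)%N ==> (0 <= f b%:Z - f a%:Z < n%:Z)].
Proof.
rewrite /Lf PS_eq0; apply/(pairwiseP 0)/forallP.
  move=> h a; apply/forallP => b; apply/implyP => hab.
  have := h a b; rewrite !inE size_map size_iota !ltn_ord => /(_ isT isT hab).
  by rewrite !(nth_map 0%N) ?size_iota ?ltn_ord // !nth_iota ?ltn_ord // !add0r phi0.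
move=> h a b; rewrite !inE size_map size_iota => ha hb hab.
rewrite !(nth_map 0%N) ?size_iota // !nth_iota // !add0r phi0.
by have := h (Ordinal ha); move/forallP => /(_ (Ordinal hb)) /implyP; apply.
Qed.

Lemma Lf_id : Lf n id = 0%N.
Proof.
apply/eqP; rewrite Lf0P; apply/forallP => a; apply/forallP => b; apply/implyP => hab.
have := ltn_ord b; lia.
Qed.

Lemma incr_all f : periodic n f -> (forall i, (i < n)%N -> f i%:Z < f (i%:Z + 1)) ->
  forall x, f x < f (x + 1).
Proof.
move=> hp h x.
have E := divz_eqn n x; set q := (x %/ n%:Z)%Z in E; set r := (x %% n%:Z)%Z in E.
have hr := modz_rng n2 x; rewrite -/r in hr.
rewrite E (_ : q * n%:Z + r + 1 = (r + 1) + q * n%:Z); last by ring.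
rewrite addrC per_k // per_k // ltrD2r.
have [r' er] : exists r' : nat, r = r'%:Z by exists `|r|%N; lia.
rewrite er; apply: h; lia.
Qed.

Lemma incr_lt f : (forall x, f x < f (x + 1)) -> forall x (k : nat), f x + k%:Z <= f (x + k%:Z).
Proof.
move=> h x; elim=> [|k IH]; first by rewrite !addr0.
have := h (x + k%:Z); rewrite intS (addrC 1) !addrA -lezD1 => hh.
by apply: le_trans hh; rewrite lerD2r.
Qed.

Lemma descent f : goodf n f -> (0 < Lf n f)%N ->
  exists2 i, (i < n)%N & f (i%:Z + 1) < f i%:Z.
Proof.
move=> [hp hi hs] hL.
case: (boolP [exists i : 'I_n, f (i%:Z + 1) < f i%:Z]).
  by case/existsP => i hlt; exists i.
rewrite negb_exists => /forallP hno.
have hinc : forall i, (i < n)%N -> f i%:Z < f (i%:Z + 1).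
  move=> i hin; have := hno (Ordinal hin); rewrite /= -leNgt le_eqVlt => /orP [/eqP h|//].
  by have := hi _ _ h; lia.
have hall := incr_all hp hinc.
suff : Lf n f == 0%N by move/eqP => h; rewrite h in hL.
rewrite Lf0P; apply/forallP => a; apply/forallP => b; apply/implyP => hab.
have h1 := incr_lt hall a%:Z (b - a)%N.
have h2 := incr_lt hall b%:Z (a + n - b)%N.
rewrite (_ : a%:Z + (b - a)%N%:Z = b%:Z) in h1; last by lia.
rewrite (_ : b%:Z + (a + n - b)%N%:Z = a%:Z + n%:Z) in h2; last by have := ltn_ord b; lia.
rewrite hp in h2.
have := ltn_ord b; lia.
Qed.

Lemma L0_id f : goodf n f -> Lf n f = 0%N -> f =1 id.
Proof.
move=> [hp hi hs] /eqP; rewrite Lf0P => /forallP h.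
have hp2 : forall a b : nat, (a < b < n)%N -> f a%:Z < f b%:Z /\ f b%:Z - f a%:Z < n%:Z.
  move=> a b /andP [hab hb].
  have := h (Ordinal (ltn_trans hab hb)); move/forallP => /(_ (Ordinal hb)) /implyP /(_ hab) /=.
  move=> hh; split; last by lia.
  rewrite lt_neqAle; apply/andP; split; last by lia.
  by apply/negP => /eqP /hi; lia.
have hge : forall a k, (a + k < n)%N -> f a%:Z + k%:Z <= f (a + k)%N%:Z.
  move=> a; elim=> [|k IH] hk; first by rewrite addr0 addn0.
  have hk' : (a + k < n)%N by lia.
  have [+ _] := hp2 (a + k)%N (a + k.+1)%N ltac:(lia).
  rewrite -lezD1 => hh.
  apply: le_trans hh; rewrite intS (addrC 1) addrA lerD2r.
  exact: IH hk'.
have hval : forall a, (a < n)%N -> f a%:Z = f 0 + a%:Z.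
  move=> a ha.
  have e1 := hge 0%N a; rewrite add0n in e1; have {}e1 := e1 ha.
  have e2 := hge a (n.-1 - a)%N; rewrite (_ : (a + (n.-1 - a))%N = n.-1) in e2; last by lia.
  have {}e2 := e2 ltac:(lia).
  have := hp2 0%N n.-1 ltac:(lia) => -[_ e3].
  have e0 : f 0%N%:Z = f 0 by [].
  rewrite e0 in e1 e3; lia.
have f00 : f 0 = 0.
  have : \sum_(j <- iota 0 n) (f 0 + j%:Z) = \sum_(j <- iota 0 n) j%:Z.
    rewrite -hs /win big_map; apply: eq_big_seq => j.
    by rewrite mem_iota add0n add0r => /andP [_ hj]; rewrite hval.
  rewrite big_split /= => E.
  have {}E : \sum_(j <- iota 0 n) f 0 = 0 by move: E; set A := \sum_(_ <- _) f 0; set B := \sum_(_ <- _) _; lia.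
  move: E.
  have sc : forall (c : int) (s : seq nat), \sum_(j <- s) c = c *+ size s.
    by move=> c; elim=> [|a s IH]; rewrite ?big_nil // big_cons IH mulrS.
  move/eqP; rewrite sc size_iota -mulr_natr mulf_eq0 => /orP [/eqP //|].
  by rewrite pnatr_eq0; lia.
move=> x /=.
have E := divz_eqn n x; set q := (x %/ n%:Z)%Z in E; set r := (x %% n%:Z)%Z in E.
have hr := modz_rng n2 x; rewrite -/r in hr.
rewrite E addrC per_k //.
have [r' er] : exists r' : nat, r = r'%:Z by exists `|r|%N; lia.
rewrite er hval; [rewrite f00; ring | lia].
Qed.

Lemma L_step_le f i : goodf n f -> (i < n)%N -> (Lf n (f \o sref n i) <= (Lf n f).+1)%N.
Proof.
move=> hg hi; case: (ltgtP (f i%:Z) (f (i%:Z + 1))) => h.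
- by rewrite L_up.
- by have := L_down n2 hg hi h; lia.
- by case: hg => _ hinj _; have := hinj _ _ h; lia.
Qed.

Lemma L_le_size w : all (fun i => i < n)%N w -> (Lf n (word_eval n w) <= size w)%N.
Proof.
elim/last_ind: w => [|w i IH]; first by move=> _; rewrite (Lf_ext (g := id)) // Lf_id.
rewrite all_rcons => /andP [hi hw].
rewrite (Lf_ext (word_eval_rcons w i)) size_rcons.
have := L_step_le (goodf_word hw) hi; have := IH hw; lia.
Qed.

Lemma word_exists k w : all (fun i => i < n)%N w -> Lf n (word_eval n w) = k ->
  exists w', [/\ all (fun i => i < n)%N w', size w' = k & word_eval n w =1 word_eval n w'].
Proof.
elim: k w => [|k IH] w hw hL.
  by exists [::]; split => //; exact: L0_id (goodf_word hw) hL.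
have hg := goodf_word hw.
have [i hi hlt] := descent hg ltac:(lia).
have hd := L_down n2 hg hi hlt.
have hw' : all (fun i => i < n)%N (rcons w i) by rewrite all_rcons hi hw.
have hL' : Lf n (word_eval n (rcons w i)) = k.
  by rewrite (Lf_ext (word_eval_rcons w i)); lia.
have [w'' [h1 h2 h3]] := IH _ hw' hL'.
exists (rcons w'' i); split.
- by rewrite all_rcons hi h1.
- by rewrite size_rcons h2.
move=> x; rewrite word_eval_rcons /= -h3 word_eval_rcons /=.
by rewrite (sref_inv n2).
Qed.

Lemma length_ascent w i a b : all (fun i => i < n)%N w -> (i < n)%N ->
  word_eval n w i%:Z < word_eval n w (i%:Z + 1) ->
  has_length n (word_eval n w \o sref n i) a -> has_length n (word_eval n w) b ->
  (b < a)%N.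
Proof.
move=> hw hi hlt [[wa [hwa [hsa hea]]] _] [_ hmin].
have hg := goodf_word hw.
have [w' [h1 h2 h3]] := word_exists hw (erefl _).
have hb := hmin w' h1 h3; rewrite h2 in hb.
have ha := L_le_size hwa; rewrite hsa -(Lf_ext hea) (L_up n2 hg hi hlt) in ha.
lia.
Qed.

End L4.

End L4.
Import L4.

Module T1.
Set Implicit Arguments. Unset Strict Implicit. Unset Printing Implicit Defensive.
Import GRing.Theory Num.Theory Order.TTheory.
Local Open Scope ring_scope.

Section Tok.
Variable n : nat.
Hypothesis n2 : (2 <= n)%N.
Variable msk : seq bool.
Implicit Types (f g : int -> int).

Lemma word_eval_cat w1 w2 : word_eval n (w1 ++ w2) =1 word_eval n w1 \o word_eval n w2.
Proof.
elim: w1 => [|a w1 IH] x //=.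
by rewrite /word_eval /= -/(word_eval n _) IH.
Qed.

Lemma prefix_word_S t : prefix_word n msk t.+1 =
  prefix_word n msk t ++ (if nth false msk t then [:: lam_letter n t] else [::]).
Proof.
rewrite /prefix_word -addn1 iotaD filter_cat map_cat /= add0n.
by case: (nth false msk t).
Qed.

Definition u t := prefix_prod n msk t.

Lemma u_S t : u t.+1 =1 if nth false msk t then u t \o sref n (t %% n) else u t.
Proof.
move=> x; rewrite /u /prefix_prod prefix_word_S word_eval_cat.
by case: (nth false msk t).
Qed.

Lemma prefix_all t : all (fun i => i < n)%N (prefix_word n msk t).
Proof.
apply/allP => i /mapP [p _ ->]; rewrite /lam_letter ltn_mod; lia.
Qed.

Lemma u_good t : goodf n (u t).
Proof. by have := goodf_word n2 (prefix_all t). Qed.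

Definition cls (x : int) : nat := `|((x - 1) %% n%:Z)%Z|%N.
Definition quo (x : int) : int := ((x - 1) %/ n%:Z)%Z.

Lemma cls_quo x : x - 1 = quo x * n%:Z + (cls x)%:Z.
Proof.
rewrite /cls /quo gez0_abs; first exact: divz_eqn.
by case/andP: (modz_rng n2 (x - 1)).
Qed.

Lemma cls_lt x : (cls x < n)%N.
Proof.
rewrite /cls; have := modz_rng n2 (x - 1); lia.
Qed.

Lemma cls_quo_uniq x q (c : nat) : (c < n)%N -> x - 1 = q * n%:Z + c%:Z ->
  cls x = c /\ quo x = q.
Proof.
move=> hc e; have [h1 h2] := divz_uniq n2 (x:=x - 1) (q:=q) (r:=c%:Z) ltac:(lia) e.
by rewrite /cls /quo h1 h2.
Qed.

Lemma cls_addn x : cls (x + n%:Z) = cls x /\ quo (x + n%:Z) = quo x + 1.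
Proof.
apply: cls_quo_uniq; first exact: cls_lt.
have := cls_quo x; lia.
Qed.

Lemma cls_eq_mod x y : cls x = cls y -> ((x - y) %% n%:Z)%Z = 0.
Proof.
move=> e; have ex := cls_quo x; have ey := cls_quo y.
rewrite (_ : x - y = (quo x - quo y) * n%:Z + 0); last by rewrite e in ex; lia.
by rewrite modzMDl mod0z.
Qed.

Lemma cls_neq f a b : goodf n f -> a != b -> `|a - b| < n%:Z -> cls (f a) != cls (f b).
Proof.
case=> hp hi _ hab hlt; apply/negP => /eqP /cls_eq_mod.
apply/eqP; exact: win_nz.
Qed.

End Tok.

End T1.
Import T1.

Module T2.
Set Implicit Arguments. Unset Strict Implicit. Unset Printing Implicit Defensive.
Import GRing.Theory Num.Theory Order.TTheory.
Local Open Scope ring_scope.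

Section Inv.
Variable n : nat.
Hypothesis n2 : (2 <= n)%N.
Variable msk : seq bool.
Local Notation u := (u n msk).
Local Notation cls := (cls n).
Local Notation quo := (quo n).

Definition V t := cls (u t t%:Z).
Definition mu t := V t.+1.
Definition alpha w t := count (fun s => mu s == w) (iota 0 t).

Lemma alpha_S w t : alpha w t.+1 = (alpha w t + (mu t == w))%N.
Proof. by rewrite /alpha -addn1 iotaD count_cat /= add0n addn0. Qed.

Definition INV t := forall d, (d < n)%N ->
  ((t + d - (d != 0%N))%N%:Z = (cls (u t (t + d)%N%:Z))%:Z +
     (alpha (cls (u t (t + d)%N%:Z)) t)%:Z + (n.-1)%:Z * quo (u t (t + d)%N%:Z)).

Lemma u0 x : u 0 x = x.
Proof. by []. Qed.

Lemma INV0 : INV 0.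
Proof.
move=> d hd; rewrite add0n u0 /alpha /=.
case: d hd => [|d] hd /=.
  have [-> ->] : cls 0 = n.-1 /\ quo 0 = -1.
    by apply: cls_quo_uniq => //; lia.
  lia.
have [-> ->] : cls d.+1%:Z = d /\ quo d.+1%:Z = 0.
  by apply: cls_quo_uniq => //; lia.
lia.
Qed.

Lemma sref_t t :
  let T := t%:Z in
  [/\ sref n (t %% n) T = T + 1, sref n (t %% n) (T + 1) = T,
      sref n (t %% n) (T + n%:Z) = T + n%:Z + 1 &
      forall d : nat, (2 <= d < n)%N -> sref n (t %% n) (T + d%:Z) = T + d%:Z].
Proof.
move=> T.
have eT : T = (t %% n)%N%:Z + (t %/ n)%N%:Z * n%:Z.
  by rewrite /T {1}(divn_eq t n) PoszD PoszM addrC.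
split.
- by rewrite eT sref_i.
- by rewrite eT (_ : _ + _ + 1 = (t %% n)%N%:Z + 1 + (t %/ n)%N%:Z * n%:Z) ?sref_i1 //; ring.
- rewrite sref_per eT sref_i; ring.
move=> d hd; apply: sref_other.
  rewrite eT (_ : _ + _ + d%:Z - _ = (t %/ n)%N%:Z * n%:Z + d%:Z); last by ring.
  rewrite modzMDl modz_small; first by apply/negP => /eqP; lia.
  lia.
rewrite eT (_ : _ + _ + d%:Z - _ = (t %/ n)%N%:Z * n%:Z + d%:Z); last by ring.
rewrite modzMDl modz_small; first by apply/negP => /eqP; lia.
lia.
Qed.

Lemma mu_neq t (d : nat) : (0 < d < n)%N -> cls (u t.+1 (t.+1 + d)%N%:Z) != mu t.
Proof.
move=> hd; rewrite /mu /V.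
have h1 : (t.+1 + d)%N%:Z != t.+1%:Z by apply/negP => /eqP; lia.
have h2 : `|(t.+1 + d)%N%:Z - t.+1%:Z| < n%:Z.
  by rewrite (_ : _ - _ = d%:Z) ?normr_nat; lia.
exact: (cls_neq n2 (u_good n2 msk t.+1) h1 h2).
Qed.

Lemma INV_S t : INV t -> INV t.+1.
Proof.
move=> I d hd.
have [s0 s1 sn sd] := sref_t t.
have [hp _ _] := u_good n2 msk t.
have US := u_S n msk t.
case: (posnP d) => [d0|dpos].
-
  rewrite d0 addn0 /= subn0.
  have -> : alpha (cls (u t.+1 t.+1%:Z)) t.+1 = (alpha (cls (u t.+1 t.+1%:Z)) t).+1.
    by rewrite alpha_S /mu /V eqxx addn1.
  rewrite US; case: (nth false msk t) => /=.
    rewrite (_ : t.+1%:Z = t%:Z + 1); last by lia.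
    rewrite s1; have := I 0%N ltac:(lia); rewrite addn0 subn0; lia.
  have := I 1%N ltac:(lia); rewrite addn1 /= subn1 /=; lia.
case: (ltnP d n.-1) => hdn.
-
  have hne := mu_neq t (d := d) ltac:(lia).
  have -> : alpha (cls (u t.+1 (t.+1 + d)%N%:Z)) t.+1 = alpha (cls (u t.+1 (t.+1 + d)%N%:Z)) t.
    by rewrite alpha_S; move: hne; rewrite eq_sym => /negPf ->; rewrite addn0.
  have -> : u t.+1 (t.+1 + d)%N%:Z = u t (t + d.+1)%N%:Z.
    have ep : (t.+1 + d)%N%:Z = t%:Z + d.+1%:Z by lia.
    have ep' : (t + d.+1)%N%:Z = t%:Z + d.+1%:Z by lia.
    rewrite US ep ep'; case: (nth false msk t); last by [].
    by rewrite /= sd //; lia.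
  have := I d.+1 ltac:(lia); rewrite /=; lia.
-
  have ed : d = n.-1 by lia.
  have hne := mu_neq t (d := d) ltac:(lia).
  have -> : alpha (cls (u t.+1 (t.+1 + d)%N%:Z)) t.+1 = alpha (cls (u t.+1 (t.+1 + d)%N%:Z)) t.
    by rewrite alpha_S; move: hne; rewrite eq_sym => /negPf ->; rewrite addn0.
  have hpos : (t.+1 + d)%N%:Z = t%:Z + n%:Z by lia.
  have [v ev] : exists v, u t.+1 (t.+1 + d)%N%:Z = v + n%:Z /\
     (t%:Z = (cls v)%:Z + (alpha (cls v) t)%:Z + (n.-1)%:Z * quo v).
    rewrite US; case: (nth false msk t) => /=.
      exists (u t (t%:Z + 1)); split.
        by rewrite hpos /= sn (_ : t%:Z + n%:Z + 1 = (t%:Z + 1) + n%:Z) ?hp //; ring.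
      have := I 1%N ltac:(lia); rewrite addn1 /= subn1 /= (_ : t.+1%:Z = t%:Z + 1) //; lia.
    exists (u t t%:Z); split; first by rewrite hpos hp.
    by have := I 0%N ltac:(lia); rewrite addn0 subn0.
  case: ev => -> ev.
  have [-> ->] := cls_addn n2 v.
  have -> : (t.+1 + d - ~~ false)%N = (t + n.-1)%N by rewrite /=; lia.
  move: ev; set c := cls v; set a := alpha c t; set q := quo v.
  rewrite mulrDr mulr1 => ev; lia.
Qed.

Lemma INV_all t : INV t.
Proof. elim: t => [|t IH]; [exact: INV0 | exact: INV_S]. Qed.

End Inv.

End T2.
Import T2.

Module T3.
Set Implicit Arguments. Unset Strict Implicit. Unset Printing Implicit Defensive.
Import GRing.Theory Num.Theory Order.TTheory.
Local Open Scope ring_scope.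

Section Cons.
Variable n : nat.
Hypothesis n2 : (2 <= n)%N.
Variable msk : seq bool.
Local Notation u := (u n msk).
Local Notation cls := (cls n).
Local Notation quo := (quo n).
Local Notation mu := (mu n msk).
Local Notation V := (V n msk).
Local Notation alpha := (alpha n msk).

Lemma mu_lt t : (mu t < n)%N.
Proof. exact: cls_lt. Qed.

Lemma mu_mod t : exists q : int,
  t%:Z = (mu t)%:Z + (alpha (mu t) t)%:Z + (n.-1)%:Z * q.
Proof.
have := @INV_all n n2 msk t.+1 0%N ltac:(lia).
rewrite addn0 subn0 alpha_S.
rewrite -/(V t.+1) -/(mu t) eqxx => h.
by exists (quo (u t.+1 (t.+1)%:Z)); move: h; lia.
Qed.

Lemma V0 : V 0 = n.-1.
Proof. by rewrite /V /T2.V u0; have [] := cls_quo_uniq n2 (q := -1) (x := 0) (c := n.-1) ltac:(lia) ltac:(lia). Qed.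

Lemma V_S t : V t.+1 = mu t.
Proof. by []. Qed.

Lemma pass_mu t : nth false msk t = true -> mu t = V t.
Proof.
move=> hb; rewrite /mu /T2.mu /V /T2.V (u_S n msk t) hb /=.
have [_ s1 _ _] := sref_t n2 t.
by rewrite (_ : t.+1%:Z = t%:Z + 1) ?s1 //; lia.
Qed.

Lemma skip_mu t : nth false msk t = false -> mu t != V t.
Proof.
move=> hb; rewrite /mu /T2.mu /V /T2.V (u_S n msk t) hb /=.
apply: (cls_neq n2 (u_good n2 msk t)).
  by apply/negP => /eqP; lia.
rewrite (_ : t.+1%:Z - t%:Z = 1); last by lia.
by rewrite normr1; lia.
Qed.

Lemma final_alpha : u (n * n.-1) =1 id -> forall w, (w < n)%N -> alpha w (n * n.-1) = n.-1.
Proof.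
move=> hid w hw.
set N := (n * n.-1)%N.
have eN : N%:Z = n%:Z * (n%:Z - 1) by rewrite /N PoszM; congr (_ * _); lia.
case: (ltnP w n.-1) => hw1.
- have := @INV_all n n2 msk N w.+1 ltac:(lia).
  rewrite hid /= (_ : (N + w.+1 - 1)%N = (N + w)%N); last by lia.
  have [-> ->] : cls (N + w.+1)%N%:Z = w /\ quo (N + w.+1)%N%:Z = n.-1%:Z.
    by apply: cls_quo_uniq => //; rewrite PoszD eN; nia.
  rewrite PoszD eN; nia.
- have ew : w = n.-1 by lia.
  have := @INV_all n n2 msk N 0%N ltac:(lia).
  rewrite hid /= !addn0 subn0.
  have [-> ->] : cls N%:Z = n.-1 /\ quo N%:Z = n.-2%:Z.
    apply: cls_quo_uniq => //; first by lia.
    rewrite eN; nia.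
  rewrite ew eN; nia.
Qed.

Lemma mu_last : u (n * n.-1) =1 id -> mu (n * n.-1).-1 = n.-1.
Proof.
move=> hid; rewrite /T2.mu (_ : (n * n.-1).-1.+1 = n * n.-1)%N; last by nia.
rewrite /T2.V hid.
have [-> _] // : cls (n * n.-1)%N%:Z = n.-1 /\ quo (n * n.-1)%N%:Z = n.-2%:Z.
apply: cls_quo_uniq => //; first by lia.
rewrite PoszM; nia.
Qed.

Lemma good_skip t : nth false msk t = false ->
  let h := V t in let a := mu t in
  (a + alpha a t < h + alpha h t)%N \/ (a + alpha a t = h + alpha h t /\ (h < a)%N) ->
  u t t%:Z < u t (t%:Z + 1).
Proof.
move=> hb h a hc.
have I0 := @INV_all n n2 msk t 0%N ltac:(lia).
have I1 := @INV_all n n2 msk t 1%N ltac:(lia).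
rewrite addn0 subn0 in I0; rewrite addn1 /= subn1 /= in I1.
have eh : cls (u t t%:Z) = h by [].
have ea : cls (u t t.+1%:Z) = a.
  by rewrite /a /T2.mu /T2.V (u_S n msk t) hb.
rewrite eh in I0; rewrite ea in I1.
have Ch := cls_quo n2 (u t t%:Z); have Ca := cls_quo n2 (u t t.+1%:Z).
rewrite eh in Ch; rewrite ea in Ca.
have hh : (h < n)%N by exact: cls_lt.
rewrite (_ : t%:Z + 1 = t.+1%:Z); last by lia.
move: I0 I1 Ch Ca hc.
set qh := quo (u t t%:Z); set qa := quo (u t t.+1%:Z).
set X := u t t%:Z; set Y := u t t.+1%:Z.
set ah := alpha h t; set aa := alpha a t.
move=> I0 I1 Ch Ca [hc|[hc1 hc2]].
- have hD : 1 <= qa - qh.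
    have : (n.-1)%:Z * (qa - qh) = (h + ah)%N%:Z - (a + aa)%N%:Z.
      rewrite !PoszD; lia.
    move=> E; have hn1 : 0 < (n.-1)%:Z by lia.
    nia.
  nia.
- have hD : qa = qh.
    have : (n.-1)%:Z * (qa - qh) = 0 by rewrite mulrBr; nia.
    move=> /eqP; rewrite mulf_eq0 subr_eq0 => /orP [|/eqP //]; lia.
  lia.
Qed.

End Cons.

End T3.
Import T3.

Module G.
Set Implicit Arguments. Unset Strict Implicit. Unset Printing Implicit Defensive.
Import GRing.Theory Num.Theory Order.TTheory.

Section Grid.
Variable m : nat.
Hypothesis m1 : (1 <= m)%N.
Variable mu : nat -> nat.
Definition alph w t := count (fun s => mu s == w) (iota 0 t).
Local Notation N := (m.+1 * m)%N.
Hypothesis hmu_lt : forall t, (mu t <= m)%N.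
Hypothesis hmod : forall t, exists q : int,
  Posz t = (Posz (mu t) + Posz (alph (mu t) t) + Posz m * q)%R.
Hypothesis hfin : forall w, (w <= m)%N -> alph w N = m.
Hypothesis hlast : mu N.-1 = m.
Definition hand t := if t is t'.+1 then mu t' else m.
Definition brk t := mu t != hand t.
Hypothesis hcount : count brk (iota 0 N) = (2 * m)%N.
Definition goodb t := let h := hand t in let a := mu t in
   (a + alph a t < h + alph h t)%N || ((a + alph a t == h + alph h t) && (h < a)%N).

Lemma alph_S w t : alph w t.+1 = (alph w t + (mu t == w))%N.
Proof. by rewrite /alph -addn1 iotaD count_cat /= add0n addn0. Qed.

Lemma alph_mono w t1 t2 : (t1 <= t2)%N -> (alph w t1 <= alph w t2)%N.
Proof.
move=> h; rewrite -(subnKC h); elim: (t2 - t1)%N => [|k IH]; first by rewrite addn0.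
by rewrite addnS alph_S; lia.
Qed.

Lemma alph_le w t : (w <= m)%N -> (t <= N)%N -> (alph w t <= m)%N.
Proof. by move=> hw ht; rewrite -(hfin hw); exact: alph_mono. Qed.

Lemma alph0 w : alph w 0 = 0%N.
Proof. by []. Qed.

Lemma move_ex_gen w k T : (k < alph w T)%N -> exists t, [/\ (t < T)%N, mu t = w & alph w t = k].
Proof.
elim: T => [|T IH] //=.
rewrite alph_S; case: (ltnP k (alph w T)) => hk.
  by move=> _; have [t [h1 h2 h3]] := IH hk; exists t; split => //; lia.
case: eqP => [e|_]; last by lia.
by move=> h; exists T; split => //; lia.
Qed.

Lemma move_ex w k : (w <= m)%N -> (k < m)%N -> exists t, [/\ (t < N)%N, mu t = w & alph w t = k].
Proof. by move=> hw hk; apply: move_ex_gen; rewrite hfin. Qed.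

Lemma hres t : (t %% m = (mu t + alph (mu t) t) %% m)%N.
Proof.
have [q e] := hmod t.
apply/eqP; rewrite -eqz_nat -!modz_nat e PoszD.
by rewrite -modzDmr (mulrC (Posz m) q) modzMl addr0.
Qed.

Lemma mod_ge x c : (c < m)%N -> (x %% m = c)%N -> (c <= x)%N.
Proof. by move=> hc <-; exact: leq_mod. Qed.

Lemma count_split (P : pred nat) (s : seq nat) :
  count P s = (\sum_(c < m) count (fun t => P t && (t %% m == c)) s)%N.
Proof.
elim: s => [|x s IH] /=; first by rewrite big1.
rewrite big_split /= -IH; congr addn.
have hx : (x %% m < m)%N by rewrite ltn_mod; lia.
rewrite (bigD1 (Ordinal hx)) //= eqxx andbT big1 ?addn0 // => c hc.
case: (P x) => //=; apply/eqP; rewrite eqb0; apply/eqP => e.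
by move/eqP: hc; apply; apply: val_inj; rewrite /= e.
Qed.

Lemma count_ge (P : pred nat) (l s : seq nat) : uniq l -> all P l -> {subset l <= s} ->
  (size l <= count P s)%N.
Proof.
move=> hu hP hs; rewrite -size_filter; apply: uniq_leq_size => // x hx.
by rewrite mem_filter (allP hP x hx) hs.
Qed.

Lemma forced c : (c < m)%N -> exists t1 t2, [/\ (t1 < t2)%N, (t2 < N)%N,
   t1 %% m = c, t2 %% m = c & [/\ brk t1, brk t2, goodb t1 & goodb t2]]%N.
Proof.
move=> hc.
have [t1 [h1N h1mu h1a]] := move_ex (w := c) (k := 0) ltac:(lia) ltac:(lia).
have [t2 [h2N h2mu h2a]] := move_ex (w := c) (k := m.-1) ltac:(lia) ltac:(lia).
have r1 : (t1 %% m = c)%N by rewrite (hres t1) h1mu h1a addn0 modn_small.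
have r2 : (t2.+1 %% m = c)%N.
  by rewrite -addn1 -modnDml (hres t2) h2mu h2a modnDml -addnA (_ : (m.-1 + 1 = m)%N) ?modnDr ?modn_small //; lia.
have t12 : (t1 <= t2)%N.
  case: (leqP t1 t2) => // h; have := alph_mono c h; rewrite alph_S h2mu eqxx h2a h1a; lia.
have h2N' : (t2.+1 < N)%N.
  case: (ltnP t2.+1 N) => // h.
  have e : t2 = N.-1 by lia.
  by move: h2mu; rewrite e hlast; lia.
have hb1 : brk t1.
  rewrite /brk h1mu; case: t1 {h1N r1 t12} h1mu h1a => [|t1] /= h1mu h1a; first by lia.
  apply/eqP => e; move: h1a; rewrite alph_S e eqxx; lia.
have hy : mu t2.+1 != c.
  apply/eqP => e; have := alph_le (w := c) (t := t2.+2) ltac:(lia) ltac:(lia).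
  by rewrite !alph_S e h2mu eqxx h2a; lia.
have hb2 : brk t2.+1 by rewrite /brk /= h2mu.
exists t1, t2.+1; split => //.
split => //.
-
  rewrite /goodb h1mu h1a addn0.
  case: t1 {h1N t12} hb1 r1 h1mu h1a => [|t1] hb1 r1 h1mu h1a /=.
    by rewrite /alph /=; apply/orP; left; lia.
  set h := mu t1.
  have hr := hres t1; rewrite -/h in hr.
  have hne : h != c by move: hb1; rewrite /brk h1mu /= eq_sym.
  rewrite alph_S /h eqxx -/h.
  have hge : (c <= h + (alph h t1 + 1))%N.
    apply: mod_ge => //; rewrite addnA -modnDml -hr modnDml addn1 //.
  case: (ltngtP c (h + (alph h t1 + 1))) hge => // hcmp _.
  by rewrite /=; lia.
-
  rewrite /goodb /= h2mu.
  set y := mu t2.+1.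
  have hyle : (y <= m)%N by exact: hmu_lt.
  have hay : (alph y t2.+1 < m)%N.
    have := alph_le (w := y) (t := t2.+2) hyle ltac:(lia).
    by rewrite alph_S /y eqxx; lia.
  have hrc : ((y + alph y t2.+1) %% m = c)%N by rewrite -hres.
  have ec : alph c t2.+1 = m by rewrite alph_S h2mu eqxx h2a; lia.
  rewrite ec.
  have hle : (y + alph y t2.+1 <= c + m)%N.
    rewrite -hrc; set z := (y + alph y t2.+1)%N.
    have : (z < 2 * m)%N by lia.
    rewrite {1}(divn_eq z m) => hz.
    have : (z %/ m < 2)%N by nia.
    move: hz; rewrite {2 4}(divn_eq z m); nia.
  case: (ltngtP (y + alph y t2.+1) (c + m)) hle => // hcmp _.
  by rewrite /=; lia.
Qed.

Theorem grid_good t : (t < N)%N -> brk t -> goodb t.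
Proof.
move=> htN hbt; apply/negPn/negP => hng.
set c0 := (t %% m)%N.
have hc0 : (c0 < m)%N by rewrite ltn_mod; lia.
have hge : forall c : 'I_m, (2 + (c == Ordinal hc0) <=
   count (fun s => brk s && (s %% m == c)) (iota 0 N))%N.
  move=> c; have [t1 [t2 [h12 h2N r1 r2 [b1 b2 g1 g2]]]] := forced (ltn_ord c).
  case: eqP => [ec|_].
  - have ht1 : t != t1 by apply/eqP => e; rewrite e in hng; rewrite g1 in hng.
    have ht2 : t != t2 by apply/eqP => e; rewrite e in hng; rewrite g2 in hng.
    apply: (count_ge (l := [:: t1; t2; t])).
    + rewrite /= !inE; move: ht1 ht2; lia.
    + by rewrite /= b1 b2 hbt r1 r2 ec /c0 !eqxx.
    + by move=> x; rewrite !inE mem_iota => /or3P [] /eqP ->; lia.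
  - apply: (count_ge (l := [:: t1; t2])).
    + by rewrite /= !inE andbT; apply/eqP; lia.
    + by rewrite /= b1 b2 r1 r2 !eqxx.
    + by move=> x; rewrite !inE mem_iota => /orP [] /eqP ->; lia.
have : (\sum_(c < m) (2 + (c == Ordinal hc0)) <=
    \sum_(c < m) count (fun s => brk s && (s %% m == c)) (iota 0 N))%N.
  by apply: leq_sum => c _; exact: hge.
rewrite -count_split hcount big_split /= sum_nat_const card_ord.
rewrite (bigD1 (Ordinal hc0)) //= eqxx big1 ?addn0; first lia.
by move=> c /negPf ->.
Qed.

End Grid.

End G.
Import G.

Module Fin.
Set Implicit Arguments. Unset Strict Implicit. Unset Printing Implicit Defensive.
Import GRing.Theory Num.Theory Order.TTheory.
Local Open Scope nat_scope.

Lemma count_negb_nth (s : seq bool) :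
  count negb s = count (fun t => ~~ nth false s t) (iota 0 (size s)).
Proof.
by rewrite -{1}(mkseq_nth false s) /mkseq count_map.
Qed.


End Fin.
Import Fin.

Import GRing.Theory Num.Theory Order.TTheory.
Theorem corollary5p15 (n : nat) (m : seq bool) (j : nat) :
  (2 <= n)%N -> in_Sn n m -> (j < n * (n - 1))%N ->
  (exists a b : nat,
      has_length n (prefix_prod n m j \o sref n (lam_letter n j)) a /\
      has_length n (prefix_prod n m j) b /\ (a < b)%N) ->
  nth false m j = true.
Proof.
move=> n2 [hsz [hcnt hid]] hj [a [b [ha [hb hab]]]].
case hnb: (nth false m j) => //; exfalso.
have hid' : u n m (n * n.-1) =1 id by move=> x; rewrite /u -subn1 hid.
set mm := n.-1.
have m1 : (1 <= mm)%N by rewrite /mm; lia.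
have eN : (mm.+1 * mm = n * n.-1)%N by rewrite /mm; congr muln; lia.
have hbrk : forall t, brk mm (T2.mu n m) t = ~~ nth false m t.
  move=> t; rewrite /brk.
  have -> : hand mm (T2.mu n m) t = T2.V n m t.
    by case: t => [|t] //=; rewrite (V0 n2 m).
  case e: (nth false m t) => /=.
    by rewrite (pass_mu n2 e) eqxx.
  exact: (skip_mu n2 e).
have hgood : goodb mm (T2.mu n m) j.
  apply: grid_good => //.
  - by move=> t; have := mu_lt n2 m t; rewrite /mm; lia.
  - move=> t; have [q hq] := mu_mod n2 m t; exists q; exact: hq.
  - move=> w hw; rewrite eN; apply: final_alpha => //; rewrite /mm in hw; lia.
  - by rewrite eN; exact: mu_last.
  - rewrite eN (_ : (n * n.-1 = size m)%N); last by rewrite hsz subn1.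
    rewrite (eq_count hbrk) -count_negb_nth hcnt /mm; lia.
  - by rewrite eN; rewrite subn1 in hj.
  - by rewrite hbrk hnb.
have hhand : hand mm (T2.mu n m) j = T2.V n m j.
  by case: (j) => [|t] //=; rewrite (V0 n2 m).
have hlt : (u n m j (Posz j) < u n m j (Posz j + 1))%R.
  apply: (good_skip n2 hnb).
  move: hgood; rewrite /goodb hhand.
  case/orP => [h|/andP [/eqP h1 h2]]; [by left | by right].
have hgf := u_good n2 m j.
case: hgf => hp _ _.
have ej : Posz j = (Posz (j %% n)%N + Posz (j %/ n)%N * Posz n)%R.
  by rewrite {1}(divn_eq j n) PoszD PoszM addrC.
have ej1 : (Posz j + 1 = (Posz (j %% n)%N + 1) + Posz (j %/ n)%N * Posz n)%R.
  by rewrite ej; ring.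
rewrite ej1 {1}ej !(per_k hp) ltrD2r in hlt.
have hi : (j %% n < n)%N by rewrite ltn_mod; lia.
have := length_ascent n2 (w := prefix_word n m j) (prefix_all n2 m j) hi hlt ha hb.
lia.
Qed.
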